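(* Let $\Gamma$ and $\Delta$ be LJB-contexts, $A$ a formula and $V$ a set of variables such that $A$ has no free variable in $V$. Let $\Sigma_1\vdash E_1$ be a flattening of the LJB-sequent $\Gamma,[\Delta]_V\vdash A$ and $\Sigma_2\vdash E_2$ a flattening of $[\Gamma]_V,[\Delta]_V\vdash A$. Then $\Sigma_1\vdash E_1$ and $\Sigma_2\vdash E_2$ are $\overline{\alpha}$-equivalent.
   Context: Formulas of minimal predicate logic: $A ::= P(t_1,\dots,t_n)\mid A\rightarrow A\mid \forall x\,A$ with first-order terms $t ::= x\mid f(t_1,\dots,t_n)$. LJ$^{+}$-sequent: finite multiset of formulas $\vdash$ formula. LJB-contexts and items: an LJB-context is a finite multiset of items; an item is a formula or $[\Gamma]_V$ with $V$ a finite set of variables (bound by the bracket) and $\Gamma$ an LJB-context; $FV([\Gamma]_V)=FV(\Gamma)\setminus V$. An LJB-sequent $\Gamma\vdash A$ is an LJB-context and a formula. A fresh $\alpha$-variant of an LJB-sequent is an $\alpha$-equivalent LJB-sequent (renaming variables bound by quantifiers or brackets) in which bound variables are pairwise distinct and distinct from free variables; a flattening of an LJB-sequent is an LJ$^{+}$-sequent obtained by erasing all brackets in a fresh $\alpha$-variant of it. Two LJ$^{+}$-sequents $\Gamma\vdash A$ and $\Gamma'\vdash A'$ are $\overline{\alpha}$-equivalent if there exist substitutions $\sigma,\sigma'$ (renamings of variables, so that the two sequents differ only by names of bound and free variables) such that $\sigma(\Gamma\vdash A)$ is $\alpha$-equivalent to $\Gamma'\vdash A'$ and $\sigma'(\Gamma'\vdash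 A')$ is $\alpha$-equivalent to $\Gamma\vdash A$. *)

(* Defs.v *)
From Stdlib Require Import List Arith PeanoNat Permutation.
Import ListNotations.

Definition var := nat.

(** First-order terms  t ::= x | f(t1,...,tn)  (function symbol named by a nat;
    the arity is the length of the argument list). *)
Inductive term : Type :=
| TVar : var -> term
| TFun : nat -> list term -> term.

Inductive formula : Type :=
| Atom : nat -> list term -> formula
| Imp : formula -> formula -> formula
| All : var -> formula -> formula.

(** LJB items: a formula, or [Gamma]_V with V a finite set of variables
    (represented by a list, read as a set) and Gamma an LJB-context.
    LJB-contexts are finite multisets of items, represented by lists
    (all notions below are invariant under permutation). *)
Inductive item : Type :=
| IForm : formula -> item
| IBrack : list var -> list item -> item.

Definition ljb_ctx := list item.
Definition ljb_seq := (ljb_ctx * formula)%type.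
(** LJ+ sequent: multiset (list up to permutation) of formulas |- formula. *)
Definition lj_seq := (list formula * formula)%type.

Fixpoint fv_term (t : term) : list var :=
  match t with
  | TVar x => [x]
  | TFun _ ts => flat_map fv_term ts
  end.

Fixpoint fv_form (A : formula) : list var :=
  match A with
  | Atom _ ts => flat_map fv_term ts
  | Imp A B => fv_form A ++ fv_form B
  | All x A => remove Nat.eq_dec x (fv_form A)
  end.

Fixpoint fv_item (i : item) : list var :=
  match i with
  | IForm A => fv_form A
  | IBrack V G => filter (fun x => negb (existsb (Nat.eqb x) V)) (flat_map fv_item G)
  end.

Definition fv_ljb_seq (S : ljb_seq) : list var :=
  flat_map fv_item (fst S) ++ fv_form (snd S).

(** All binding occurrences (with multiplicity): quantifiers and brackets. *)
Fixpoint bv_form (A : formula) : list var :=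
  match A with
  | Atom _ _ => []
  | Imp A B => bv_form A ++ bv_form B
  | All x A => x :: bv_form A
  end.

Fixpoint bv_item (i : item) : list var :=
  match i with
  | IForm A => bv_form A
  | IBrack V G => V ++ flat_map bv_item G
  end.

Definition bv_ljb_seq (S : ljb_seq) : list var :=
  flat_map bv_item (fst S) ++ bv_form (snd S).

(** rho: list of pairs of corresponding bound variables (innermost first).
    With the empty list, free variables must coincide. *)
Fixpoint aeq_var (rho : list (var * var)) (x y : var) : Prop :=
  match rho with
  | [] => x = y
  | (a, b) :: rho' => (x = a /\ y = b) \/ (x <> a /\ y <> b /\ aeq_var rho' x y)
  end.

Fixpoint aeq_term (rho : list (var * var)) (t u : term) : Prop :=
  match t, u with
  | TVar x, TVar y => aeq_var rho x y
  | TFun f ts, TFun g us =>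
      f = g /\
      (fix go (ts us : list term) : Prop :=
         match ts, us with
         | [], [] => True
         | t :: ts', u :: us' => aeq_term rho t u /\ go ts' us'
         | _, _ => False
         end) ts us
  | _, _ => False
  end.

Fixpoint aeq_form (rho : list (var * var)) (A B : formula) : Prop :=
  match A, B with
  | Atom P ts, Atom Q us => P = Q /\ Forall2 (aeq_term rho) ts us
  | Imp A1 A2, Imp B1 B2 => aeq_form rho A1 B1 /\ aeq_form rho A2 B2
  | All x A', All y B' => aeq_form ((x, y) :: rho) A' B'
  | _, _ => False
  end.

Definition bij_on (ps : list (var * var)) (V1 V2 : list var) : Prop :=
  NoDup (map fst ps) /\ NoDup (map snd ps) /\
  (forall x, In x V1 <-> In x (map fst ps)) /\
  (forall y, In y V2 <-> In y (map snd ps)).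

Inductive aeq_item : list (var * var) -> item -> item -> Prop :=
| aeq_IForm rho A B :
    aeq_form rho A B -> aeq_item rho (IForm A) (IForm B)
| aeq_IBrack rho V1 V2 G1 G2 G2' ps :
    bij_on ps V1 V2 ->
    Permutation G2 G2' ->
    Forall2 (aeq_item (ps ++ rho)) G1 G2' ->
    aeq_item rho (IBrack V1 G1) (IBrack V2 G2).

Definition aeq_ljb_seq (S S' : ljb_seq) : Prop :=
  exists G', Permutation (fst S') G' /\
    Forall2 (aeq_item []) (fst S) G' /\ aeq_form [] (snd S) (snd S').

Definition aeq_lj_seq (S S' : lj_seq) : Prop :=
  exists G', Permutation (fst S') G' /\
    Forall2 (aeq_form []) (fst S) G' /\ aeq_form [] (snd S) (snd S').

Definition fresh_alpha_variant (S S' : ljb_seq) : Prop :=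
  aeq_ljb_seq S S' /\
  NoDup (bv_ljb_seq S') /\
  (forall x, In x (bv_ljb_seq S') -> ~ In x (fv_ljb_seq S')).

Fixpoint erase_item (i : item) : list formula :=
  match i with
  | IForm A => [A]
  | IBrack _ G => flat_map erase_item G
  end.

Definition erase_ctx (G : ljb_ctx) : list formula := flat_map erase_item G.

Definition flattening (S : ljb_seq) (T : lj_seq) : Prop :=
  exists S', fresh_alpha_variant S S' /\
    Permutation (fst T) (erase_ctx (fst S')) /\ snd T = snd S'.

Definition upd (s : var -> var) (x z : var) : var -> var :=
  fun v => if Nat.eqb v x then z else s v.

Fixpoint subst_term (s : var -> var) (t : term) : term :=
  match t with
  | TVar x => TVar (s x)
  | TFun f ts => TFun f (map (subst_term s) ts)
  end.

(** Bound variables are renamed to a variable larger than every image of a free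
    variable, so that no capture occurs. *)
Fixpoint subst_form (s : var -> var) (A : formula) : formula :=
  match A with
  | Atom P ts => Atom P (map (subst_term s) ts)
  | Imp A B => Imp (subst_form s A) (subst_form s B)
  | All x A' =>
      let z := S (list_max (map s (remove Nat.eq_dec x (fv_form A')))) in
      All z (subst_form (upd s x z) A')
  end.

Definition subst_lj_seq (s : var -> var) (S : lj_seq) : lj_seq :=
  (map (subst_form s) (fst S), subst_form s (snd S)).

Definition abar_equiv (S S' : lj_seq) : Prop :=
  exists s s' : var -> var,
    aeq_lj_seq (subst_lj_seq s S) S' /\ aeq_lj_seq (subst_lj_seq s' S') S.

(* Main.v *)
Require Import Defs.
From Stdlib Require Import List.
Import ListNotations.
From Stdlib Require Import Arith PeanoNat Permutation ClassicalEpsilon Lia.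

Definition rel := var -> var -> Prop.
Definition ext (R : rel) (a b : var) : rel :=
  fun u v => (u = a /\ v = b) \/ (u <> a /\ v <> b /\ R u v).
Definition flipR (R : rel) : rel := fun u v => R v u.
Definition compR (R1 R2 : rel) : rel := fun u w => exists v, R1 u v /\ R2 v w.
Definition subR (R1 R2 : rel) := forall u v, R1 u v -> R2 u v.
Definition extB (V1 V2 : list var) (C R : rel) : rel :=
  fun u v => C u v \/ (~ In u V1 /\ ~ In v V2 /\ R u v).
Definition funcR (R : rel) := forall u v1 v2, R u v1 -> R u v2 -> v1 = v2.
Definition bijR (C : rel) (V1 V2 : list var) : Prop :=
  (forall u v, C u v -> In u V1 /\ In v V2) /\ funcR C /\ funcR (flipR C).

Fixpoint term_ind' (P : term -> Prop) (HV : forall x, P (TVar x))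
  (HF : forall f ts, Forall P ts -> P (TFun f ts)) (t : term) : P t :=
  match t with
  | TVar x => HV x
  | TFun f ts => HF f ts ((fix go (ts : list term) : Forall P ts :=
       match ts with [] => Forall_nil _ | t :: ts' => Forall_cons _ (term_ind' P HV HF t) (go ts') end) ts)
  end.

Fixpoint item_ind' (P : item -> Prop) (HF : forall A, P (IForm A))
  (HB : forall V G, Forall P G -> P (IBrack V G)) (i : item) : P i :=
  match i with
  | IForm A => HF A
  | IBrack V G => HB V G ((fix go (G : list item) : Forall P G :=
       match G with [] => Forall_nil _ | t :: ts' => Forall_cons _ (item_ind' P HF HB t) (go ts') end) G)
  end.

Inductive alphaT (R : rel) : term -> term -> Prop :=
| aT_var x y : R x y -> alphaT R (TVar x) (TVar y)
| aT_fun f ts us : Forall2 (alphaT R) ts us -> alphaT R (TFun f ts) (TFun f us).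

Fixpoint alphaF (R : rel) (A B : formula) {struct A} : Prop :=
  match A, B with
  | Atom P ts, Atom Q us => P = Q /\ Forall2 (alphaT R) ts us
  | Imp A1 A2, Imp B1 B2 => alphaF R A1 B1 /\ alphaF R A2 B2
  | All x A', All y B' => alphaF (ext R x y) A' B'
  | _, _ => False
  end.

Inductive alphaI : rel -> item -> item -> Prop :=
| aI_form R A B : alphaF R A B -> alphaI R (IForm A) (IForm B)
| aI_brack R V1 V2 G1 G2 G2' C : bijR C V1 V2 -> Permutation G2 G2' ->
    Forall2 (alphaI (extB V1 V2 C R)) G1 G2' -> alphaI R (IBrack V1 G1) (IBrack V2 G2).

Lemma Forall_Forall2 {A B} (P : A -> Prop) (Q Q' : A -> B -> Prop) l1 l2 :
  Forall P l1 -> Forall2 Q l1 l2 -> (forall a b, P a -> Q a b -> Q' a b) -> Forall2 Q' l1 l2.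
Proof. intros HP HQ H. induction HQ; inversion HP; subst; constructor; auto. Qed.

Lemma Forall2_comp3 {A B C} (P : A -> Prop) (Q1 : A -> B -> Prop) (Q2 : B -> C -> Prop) (Q3 : A -> C -> Prop) l1 l2 l3 :
  Forall P l1 -> Forall2 Q1 l1 l2 -> Forall2 Q2 l2 l3 ->
  (forall a b c, P a -> Q1 a b -> Q2 b c -> Q3 a c) -> Forall2 Q3 l1 l3.
Proof.
  intros HP H1. revert l3. induction H1; intros l3 H2 HH; inversion H2; subst; inversion HP; subst; constructor; eauto.
Qed.

Lemma ext_mono R R' a b : subR R R' -> subR (ext R a b) (ext R' a b).
Proof. unfold subR, ext; intros H u v; firstorder. Qed.
Lemma extB_mono V1 V2 C R R' : subR R R' -> subR (extB V1 V2 C R) (extB V1 V2 C R').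
Proof. unfold subR, extB; intros H u v; firstorder. Qed.

Lemma alphaT_mono t : forall R R' u, subR R R' -> alphaT R t u -> alphaT R' t u.
Proof.
  induction t using term_ind'; intros R R' u HS Ht; inversion Ht; subst.
  - constructor; auto.
  - constructor. eapply Forall_Forall2; [eassumption|eassumption|]. simpl; eauto.
Qed.

Lemma alphaF_mono A : forall R R' B, subR R R' -> alphaF R A B -> alphaF R' A B.
Proof.
  induction A; intros R R' B HS H; destruct B; simpl in *; try tauto.
  - destruct H; split; auto. eapply Forall2_impl; [|eauto]. intros; eapply alphaT_mono; eauto.
  - destruct H; split; eauto.
  - eapply IHA; [|eauto]. apply ext_mono; auto.
Qed.

Lemma alphaI_mono i : forall R R' j, subR R R' -> alphaI R i j -> alphaI R' i j.
Proof.
  induction i using item_ind'; intros R R' j HS Hij; inversion Hij; subst.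
  - constructor; eapply alphaF_mono; eauto.
  - econstructor; eauto. eapply Forall_Forall2; eauto. simpl; intros a b Ha Hab.
    eapply Ha; [|eauto]. apply extB_mono; auto.
Qed.

Lemma alphaT_flip t : forall R u, alphaT R t u -> alphaT (flipR R) u t.
Proof.
  induction t using term_ind'; intros R u Ht; inversion Ht; subst.
  - constructor; auto.
  - constructor. apply Forall2_flip. eapply Forall_Forall2; [eassumption|eassumption|]. simpl; eauto.
Qed.

Lemma alphaF_flip A : forall R B, alphaF R A B -> alphaF (flipR R) B A.
Proof.
  induction A; intros R B H; destruct B; simpl in *; try tauto.
  - destruct H; split; auto. apply Forall2_flip. eapply Forall2_impl; [|eauto]. intros; eapply alphaT_flip; eauto.
  - destruct H; split; eauto.
  - eapply alphaF_mono; [|apply IHA; eauto]. unfold subR, flipR, ext; intros; firstorder.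
Qed.

Lemma bijR_flip C V1 V2 : bijR C V1 V2 -> bijR (flipR C) V2 V1.
Proof. unfold bijR, flipR, funcR; firstorder. Qed.

Lemma alphaI_flip i : forall R j, alphaI R i j -> alphaI (flipR R) j i.
Proof.
  induction i using item_ind'; intros R j Hij; inversion Hij; subst.
  - constructor; apply alphaF_flip; auto.
  - assert (HF : Forall2 (fun b a => alphaI (flipR (extB V V2 C R)) b a) G2' G).
    { apply Forall2_flip. eapply Forall_Forall2; [eassumption|eassumption|]. simpl; eauto. }
    destruct (Permutation_Forall2 (Permutation_sym H4) HF) as [G1' [HP HF']].
    econstructor. apply bijR_flip; eauto. exact HP.
    eapply Forall2_impl; [|exact HF']. intros a b Hab. eapply alphaI_mono; [|exact Hab].
    unfold subR, flipR, extB; intros; firstorder.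
Qed.

Lemma alphaT_comp t : forall R1 R2 u w, alphaT R1 t u -> alphaT R2 u w -> alphaT (compR R1 R2) t w.
Proof.
  induction t using term_ind'; intros R1 R2 u w H1 H2; inversion H1; subst; inversion H2; subst.
  - constructor; exists y; auto.
  - constructor. eapply Forall2_comp3; [eassumption|eassumption|eassumption|]. simpl; eauto.
Qed.

Lemma alphaF_comp A : forall R1 R2 B C, alphaF R1 A B -> alphaF R2 B C -> alphaF (compR R1 R2) A C.
Proof.
  induction A; intros R1 R2 B C H1 H2; destruct B; simpl in *; try tauto; destruct C; simpl in *; try tauto.
  - destruct H1, H2; split; [congruence|]. eapply Forall2_comp3 with (P := fun _ => True); eauto.
    apply Forall_forall; auto. intros; eapply alphaT_comp; eauto.
  - destruct H1, H2; split; eauto.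
  - eapply alphaF_mono; [|eapply IHA; eauto]. unfold subR, compR, ext; intros u w [x [Hx Hy]].
    destruct Hx as [[-> ->]|[? [? ?]]]; destruct Hy as [[? ->]|[? [? ?]]]; try congruence; eauto.
    right; repeat split; eauto.
Qed.

Lemma alphaI_comp i : forall R1 R2 j k, alphaI R1 i j -> alphaI R2 j k -> alphaI (compR R1 R2) i k.
Proof.
  induction i using item_ind'; intros R1 R2 j k H1 H2; inversion H1; subst; inversion H2; subst.
  - constructor; eapply alphaF_comp; eauto.
  - destruct (Permutation_Forall2 H6 H11) as [G3 [HP3 HF3]].
    econstructor.
    + instantiate (1 := compR C C0). destruct H4 as [Hd1 [Hf1 Hi1]]. destruct H5 as [Hd2 [Hf2 Hi2]].
      unfold funcR, flipR, compR in *. split; [|split].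
      * intros u w [v [? ?]]. split; [apply (Hd1 u v)|apply (Hd2 v w)]; auto.
      * intros u w1 w2 [v1 [? ?]] [v2 [? ?]]. assert (v1 = v2) by eauto. subst. eauto.
      * intros w u1 u2 [v1 [? ?]] [v2 [? ?]]. assert (v1 = v2) by eauto. subst. eauto.
    + eapply Permutation_trans; eauto.
    + eapply Forall2_comp3; [eassumption|eassumption|eassumption|]. simpl. intros a b c Ha Hab Hbc.
      eapply alphaI_mono; [|eapply Ha; eauto]. destruct H4 as [Hd1 _]. destruct H5 as [Hd2 _].
      unfold subR, compR, extB; intros u w [v [Hx Hy]].
      destruct Hx as [Hc|[? [? ?]]].
      * destruct (Hd1 _ _ Hc). destruct Hy as [Hc'|[? [? ?]]]; [left; eauto| tauto].
      * destruct Hy as [Hc'|[? [? ?]]]; [destruct (Hd2 _ _ Hc'); tauto|]. right; repeat split; eauto.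
Qed.

Lemma in_list_max x l : In x l -> x <= list_max l.
Proof. intros H. assert (Hf := proj1 (list_max_le l (list_max l)) (le_n _)).
  rewrite Forall_forall in Hf; auto. Qed.

Lemma alphaT_subst t : forall R R' s u, alphaT R t u ->
  (forall x y, In x (fv_term t) -> R x y -> R' (s x) y) -> alphaT R' (subst_term s t) u.
Proof.
  induction t using term_ind'; intros R R' s u Ht Hc; inversion Ht; subst; simpl.
  - constructor. apply Hc; simpl; auto.
  - constructor. clear Ht. revert H Hc; induction H3 as [|? ? ? ? Hxy ? IHHF]; intros HFa Hc;
    simpl; constructor; inversion HFa as [|? ? Hh Ht']; subst.
    + eapply Hh; eauto. intros; apply Hc; simpl; auto. apply in_or_app; auto.
    + apply IHHF; auto. intros; apply Hc; simpl in *; auto. apply in_or_app; auto.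
Qed.

Lemma alphaF_subst A : forall R R' s B, alphaF R A B ->
  (forall x y, In x (fv_form A) -> R x y -> R' (s x) y) -> alphaF R' (subst_form s A) B.
Proof.
  induction A; intros R R' s B H Hc; destruct B; simpl in *; try tauto.
  - destruct H as [? H]; split; auto. clear -H Hc. induction H; simpl; constructor.
    + eapply alphaT_subst; eauto. intros; apply Hc; simpl; auto. apply in_or_app; auto.
    + apply IHForall2. intros; apply Hc; simpl; auto. apply in_or_app; auto.
  - destruct H; split; [eapply IHA1|eapply IHA2]; eauto; intros; apply Hc; auto; apply in_or_app; auto.
  - eapply IHA; eauto. intros x y Hx Hxy. unfold ext, upd in *.
    destruct Hxy as [[-> ->]|[Hn [Hn' HR]]].
    + rewrite Nat.eqb_refl. left; auto.
    + apply Nat.eqb_neq in Hn as Hb. rewrite Hb. right. repeat split; auto.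
      * intros Heq. assert (Hin : In (s x) (map s (remove Nat.eq_dec v (fv_form A)))).
        { apply in_map. apply in_in_remove; auto. }
        apply in_list_max in Hin. lia.
      * apply Hc; auto. apply in_in_remove; auto.
Qed.

Lemma alphaT_fv t : forall R u x, alphaT R t u -> In x (fv_term t) -> exists w, R x w /\ In w (fv_term u).
Proof.
  induction t using term_ind'; intros R u y Ht Hy; inversion Ht; subst; simpl in *.
  - destruct Hy as [<-|[]]. exists y0; auto.
  - clear Ht. revert H Hy; induction H3 as [|? ? ? ? Hxy ? IHHF]; intros HFa Hy;
    simpl in *; [tauto|]. inversion HFa as [|? ? Hh Ht']; subst.
    apply in_app_or in Hy as [Hy|Hy].
    + destruct (Hh _ _ _ ltac:(eassumption) Hy) as [w [? ?]]. exists w; split; auto. apply in_or_app; auto.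
    + destruct (IHHF Ht' Hy) as [w [? ?]]. exists w; split; auto. apply in_or_app; auto.
Qed.

Lemma alphaF_fv A : forall R B x, alphaF R A B -> In x (fv_form A) -> exists w, R x w /\ In w (fv_form B).
Proof.
  induction A; intros R B y H Hy; destruct B; simpl in *; try tauto.
  - destruct H as [_ H]. clear -H Hy. induction H; simpl in *; [tauto|].
    apply in_app_or in Hy as [Hy|Hy].
    + destruct (alphaT_fv _ _ _ _ H Hy) as [w [? ?]]. exists w; split; auto. apply in_or_app; auto.
    + destruct (IHForall2 Hy) as [w [? ?]]. exists w; split; auto. apply in_or_app; auto.
  - destruct H. apply in_app_or in Hy as [Hy|Hy].
    + destruct (IHA1 _ _ _ H Hy) as [w [? ?]]. exists w; split; auto. apply in_or_app; auto.
    + destruct (IHA2 _ _ _ H0 Hy) as [w [? ?]]. exists w; split; auto. apply in_or_app; auto.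
  - apply in_remove in Hy as [Hy Hne]. destruct (IHA _ _ _ H Hy) as [w [Hw Hin]].
    unfold ext in Hw. destruct Hw as [[? ?]|[? [? ?]]]; [congruence|].
    exists w; split; auto. apply in_in_remove; auto.
Qed.

Lemma in_filter_notV x V l : In x (filter (fun x => negb (existsb (Nat.eqb x) V)) l) <-> In x l /\ ~ In x V.
Proof.
  rewrite filter_In. split.
  - intros [H1 H2]. split; auto. intros Hx. apply Bool.negb_true_iff in H2.
    assert (existsb (Nat.eqb x) V = true). { apply existsb_exists. exists x; split; auto. apply Nat.eqb_refl. }
    congruence.
  - intros [H1 H2]. split; auto. apply Bool.negb_true_iff. destruct (existsb (Nat.eqb x) V) eqn:E; auto.
    apply existsb_exists in E as [y [Hy Hxy]]. apply Nat.eqb_eq in Hxy; subst; tauto.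
Qed.

Lemma Forall2_inl {A B} (P : A -> B -> Prop) l1 l2 a : Forall2 P l1 l2 -> In a l1 -> exists b, In b l2 /\ P a b.
Proof. induction 1; simpl; [tauto|]. intros [<-|H1]; [eauto|]. destruct (IHForall2 H1) as [b [? ?]]; eauto. Qed.

Lemma alphaI_fv i : forall R j x, alphaI R i j -> In x (fv_item i) -> exists w, R x w /\ In w (fv_item j).
Proof.
  induction i using item_ind'; intros R j y Hij Hy; inversion Hij; subst; simpl in *.
  - eapply alphaF_fv; eauto.
  - apply in_filter_notV in Hy as [Hy Hn]. apply in_flat_map in Hy as [g [Hg Hyg]].
    rewrite Forall_forall in H.
    destruct (Forall2_inl _ _ _ _ ltac:(eassumption) Hg) as [g' [Hg' Hgg']].
    destruct (H g Hg _ _ _ Hgg' Hyg) as [w [Hw Hwin]].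
    destruct Hw as [Hc|[? [Hw2 HR]]]. { destruct H2 as [Hd _]. destruct (Hd _ _ Hc); tauto. }
    exists w; split; auto. apply in_filter_notV; split; auto.
    apply in_flat_map. exists g'; split; auto. eapply Permutation_in; [apply Permutation_sym; eassumption|]; auto.
Qed.

Fixpoint interpR (rho : list (var * var)) (R0 : rel) : rel :=
  match rho with [] => R0 | (a, b) :: r => ext (interpR r R0) a b end.

Lemma aeq_var_iff rho x y : aeq_var rho x y <-> interpR rho eq x y.
Proof. induction rho as [|[a b] r IH]; simpl; [tauto|]. unfold ext. rewrite IH. tauto. Qed.

Lemma aeq_term_iff t : forall rho u, aeq_term rho t u <-> alphaT (interpR rho eq) t u.
Proof.
  induction t using term_ind'; intros rho u; destruct u; simpl.
  - rewrite aeq_var_iff. split; intros Hh; [constructor; auto|inversion Hh; auto].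
  - split; intros Hh; [tauto|inversion Hh].
  - split; intros Hh; [tauto|inversion Hh].
  - split.
    + intros [-> Hg]. constructor. revert l Hg. induction H as [|t ts Ht Hts IH]; intros l Hg; destruct l; try tauto; constructor.
      * apply Ht. tauto.
      * apply IH. tauto.
    + intros Hh. inversion Hh; subst. split; auto. clear Hh.
      match goal with HF : Forall2 _ _ _ |- _ => rename HF into Hg end.
      revert l Hg. induction H as [|t ts Ht Hts IH]; intros l Hg; destruct l; inversion Hg; subst; auto.
      split. apply Ht; auto. apply IH; auto.
Qed.

Lemma aeq_form_iff A : forall rho B, aeq_form rho A B <-> alphaF (interpR rho eq) A B.
Proof.
  induction A; intros rho B; destruct B; simpl; try tauto.
  - split; intros [-> Hh]; split; auto; (eapply Forall2_impl; [|exact Hh]); intros; apply aeq_term_iff; auto.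
  - rewrite IHA1, IHA2; tauto.
  - rewrite IHA. simpl. tauto.
Qed.

Lemma interpR_app ps rho R0 : interpR (ps ++ rho) R0 = interpR ps (interpR rho R0).
Proof. induction ps as [|[a b] ps IH]; simpl; auto. rewrite IH; auto. Qed.

Lemma interpR_sub ps R0 u v : interpR ps R0 u v ->
  In (u, v) ps \/ (~ In u (map fst ps) /\ ~ In v (map snd ps) /\ R0 u v).
Proof.
  induction ps as [|[a b] ps IH]; simpl; [tauto|]. unfold ext.
  intros [[-> ->]|[Ha [Hb Hr]]]; [auto|]. destruct (IH Hr) as [?|[? [? ?]]]; [auto|].
  right; repeat split; auto; intros [?|?]; auto.
Qed.

Lemma nodup_fst_func (ps : list (var * var)) a b1 b2 : NoDup (map fst ps) -> In (a, b1) ps -> In (a, b2) ps -> b1 = b2.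
Proof.
  induction ps as [|[x y] ps IH]; simpl; [tauto|]. intros Hn H1 H2. inversion Hn; subst.
  destruct H1 as [H1|H1]; destruct H2 as [H2|H2]; try congruence.
  - inversion H1; subst. exfalso. apply H3. apply (in_map fst) in H2; auto.
  - inversion H2; subst. exfalso. apply H3. apply (in_map fst) in H1; auto.
  - eauto.
Qed.

Lemma nodup_snd_func (ps : list (var * var)) a1 a2 b : NoDup (map snd ps) -> In (a1, b) ps -> In (a2, b) ps -> a1 = a2.
Proof.
  induction ps as [|[x y] ps IH]; simpl; [tauto|]. intros Hn H1 H2. inversion Hn; subst.
  destruct H1 as [H1|H1]; destruct H2 as [H2|H2]; try congruence.
  - inversion H1; subst. exfalso. apply H3. apply (in_map snd) in H2; auto.
  - inversion H2; subst. exfalso. apply H3. apply (in_map snd) in H1; auto.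
  - eauto.
Qed.

Definition psR (ps : list (var * var)) : rel := fun u v => In (u, v) ps.

Lemma bij_on_bijR ps V1 V2 : bij_on ps V1 V2 -> bijR (psR ps) V1 V2.
Proof.
  intros [Hn1 [Hn2 [H1 H2]]]. unfold bijR, psR, funcR, flipR. split; [|split].
  - intros u v Hin. split; [apply H1; apply (in_map fst) in Hin; auto|apply H2; apply (in_map snd) in Hin; auto].
  - intros; eapply nodup_fst_func; eauto.
  - intros; eapply nodup_snd_func; eauto.
Qed.

Lemma aeq_item_alpha i : forall rho j, aeq_item rho i j -> alphaI (interpR rho eq) i j.
Proof.
  induction i using item_ind'; intros rho j Hij; inversion Hij; subst.
  - constructor. apply aeq_form_iff; auto.
  - econstructor. apply bij_on_bijR; eauto. eauto.
    eapply Forall_Forall2; [eassumption|eassumption|]. simpl. intros a b Ha Hab.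
    eapply alphaI_mono; [|apply Ha; eauto]. rewrite interpR_app.
    unfold subR, extB, psR; intros u v Huv. destruct (interpR_sub _ _ _ _ Huv) as [?|[Hu [Hv Hr]]]; auto.
    right. match goal with HB : bij_on _ _ _ |- _ => destruct HB as [_ [_ [HB1 HB2]]] end.
    rewrite HB1, HB2. auto.
Qed.

Definition EP (K R : rel) (fvs : list var) (f1 f2 : formula) : Prop :=
  exists R', alphaF R' f1 f2 /\ forall u w, In u (fv_form f1) -> R' u w -> K u w \/ (In u fvs /\ R u w).

Lemma EP_mono K K' R fvs fvs' f1 f2 : subR K K' -> incl fvs fvs' -> EP K R fvs f1 f2 -> EP K' R fvs' f1 f2.
Proof.
  intros HK Hf [R' [Ha Hc]]. exists R'; split; auto. intros u w Hu Hr.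
  destruct (Hc u w Hu Hr) as [?|[? ?]]; [left; auto|right; auto].
Qed.

Lemma nodup_disj {A} (l m : list A) a : NoDup (l ++ m) -> In a l -> In a m -> False.
Proof.
  induction l; simpl; [tauto|]. intros Hn [<-|Hl] Hm; inversion Hn; subst.
  - apply H1. apply in_or_app; auto.
  - eauto.
Qed.

Definition ItemProp (i : item) : Prop := forall R j, alphaI R i j -> NoDup (bv_item i) ->
  exists K L2, funcR K /\ (forall u w, K u w -> In u (bv_item i)) /\
    Permutation (erase_item j) L2 /\ Forall2 (EP K R (fv_item i)) (erase_item i) L2.

Lemma erase_list_lem G : Forall ItemProp G -> forall R G', Forall2 (alphaI R) G G' ->
  NoDup (flat_map bv_item G) ->
  exists K L2, funcR K /\ (forall u w, K u w -> In u (flat_map bv_item G)) /\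
    Permutation (erase_ctx G') L2 /\ Forall2 (EP K R (flat_map fv_item G)) (erase_ctx G) L2.
Proof.
  intros HG R G' HF. induction HF as [|i j G G' Hij HF IH]; intros Hn.
  - exists (fun _ _ => False), []. unfold funcR, erase_ctx; simpl; repeat split; try tauto; constructor.
  - inversion HG as [|? ? Hi HG']; subst. simpl in Hn.
    destruct (Hi R j Hij (NoDup_app_remove_r _ _ Hn)) as [K1 [L1 [Hf1 [Hd1 [Hp1 Hq1]]]]].
    destruct (IH HG' (NoDup_app_remove_l _ _ Hn)) as [K2 [L2 [Hf2 [Hd2 [Hp2 Hq2]]]]].
    exists (fun u w => K1 u w \/ K2 u w), (L1 ++ L2). split; [|split; [|split]].
    + intros u w1 w2 [Ha|Ha] [Hb|Hb]; eauto; exfalso; eapply nodup_disj; eauto.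
    + intros u w [Ha|Ha]; simpl; apply in_or_app; eauto.
    + unfold erase_ctx in *; simpl. apply Permutation_app; auto.
    + unfold erase_ctx in *; simpl. apply Forall2_app.
      * eapply Forall2_impl; [|exact Hq1]. intros; eapply EP_mono; [| |eassumption].
        unfold subR; auto. simpl; intros x Hx; apply in_or_app; auto.
      * eapply Forall2_impl; [|exact Hq2]. intros; eapply EP_mono; [| |eassumption].
        unfold subR; auto. simpl; intros x Hx; apply in_or_app; auto.
Qed.

Lemma erase_item_lem i : ItemProp i.
Proof.
  induction i using item_ind'; intros R j Hij Hn; inversion Hij; subst.
  - exists (fun _ _ => False), [B]. split; [unfold funcR; tauto|]. split; [tauto|]. split; [simpl; auto|].
    simpl. constructor; [|constructor]. exists R; split; auto.
  - change (NoDup (V ++ flat_map bv_item G)) in Hn.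
    destruct (erase_list_lem G H _ _ ltac:(eassumption) (NoDup_app_remove_l _ _ Hn)) as [Kl [L2 [Hf [Hd [Hp Hq]]]]].
    match goal with HB : bijR _ _ _ |- _ => destruct HB as [HBd [HBf _]] end.
    exists (fun u w => C u w \/ Kl u w), L2. split; [|split; [|split]].
    + intros u w1 w2 [Ha|Ha] [Hb|Hb]; eauto; exfalso;
      (eapply nodup_disj; [eassumption|apply (HBd _ _ Ha)|eauto]) ||
      (eapply nodup_disj; [eassumption|apply (HBd _ _ Hb)|eauto]).
    + intros u w [Ha|Ha]; simpl; apply in_or_app; [left; apply (HBd _ _ Ha)|right; eauto].
    + simpl. eapply Permutation_trans; [|exact Hp]. unfold erase_ctx. apply Permutation_flat_map. auto.
    + simpl. eapply Forall2_impl; [|exact Hq]. intros f1 f2 [R' [Ha Hc]]. exists R'; split; auto.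
      intros u w Hu Hr. destruct (Hc u w Hu Hr) as [HK|[Hin [HC|[Hu1 [Hw1 HR]]]]]; auto.
      right; split; auto. apply in_filter_notV; auto.
Qed.

Lemma interp_extB ps V1 V2 rho : bij_on ps V1 V2 ->
  subR (interpR (ps ++ rho) eq) (extB V1 V2 (psR ps) (interpR rho eq)).
Proof.
  intros HB. rewrite interpR_app.
  unfold subR, extB, psR; intros u v Huv. destruct (interpR_sub _ _ _ _ Huv) as [?|[Hu [Hv Hr]]]; auto.
  right. destruct HB as [_ [_ [HB1 HB2]]]. rewrite HB1, HB2. auto.
Qed.

Lemma pair_via {A B C} (P : A -> B -> Prop) (Q : A -> C -> Prop) l l1 l2 :
  Forall2 P l l1 -> Forall2 Q l l2 -> Forall2 (fun a b => exists c, P c a /\ Q c b) l1 l2.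
Proof. intros H1. revert l2. induction H1; intros l2 H2; inversion H2; subst; constructor; eauto. Qed.

Definition sfun (Q : rel) : var -> var := fun u => epsilon (inhabits 0) (Q u).

Definition Good (Q : rel) (f1 f2 : formula) : Prop :=
  exists R', alphaF R' f1 f2 /\ forall u w, In u (fv_form f1) -> R' u w -> Q u w.

Lemma good_aeq Q f1 f2 : funcR Q -> Good Q f1 f2 -> aeq_form [] (subst_form (sfun Q) f1) f2.
Proof.
  intros HQ [R' [Ha Hc]]. apply aeq_form_iff. simpl. eapply alphaF_subst; [exact Ha|].
  intros x y Hx Hxy. assert (HQx : Q x y) by auto. unfold sfun.
  assert (Q x (epsilon (inhabits 0) (Q x))) by (apply epsilon_spec; eauto). eapply HQ; eauto.
Qed.

Lemma assemble Q G1 G2 X Y E1 E2 : funcR Q -> Permutation G1 X -> Permutation G2 Y ->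
  Forall2 (Good Q) X Y -> Good Q E1 E2 -> aeq_lj_seq (subst_lj_seq (sfun Q) (G1, E1)) (G2, E2).
Proof.
  intros HQ HP1 HP2 HF HE. destruct (Permutation_Forall2 (Permutation_sym HP1) HF) as [Y' [HY HF']].
  exists Y'. simpl. split; [eapply Permutation_trans; eauto|split].
  - clear -HF' HQ. induction HF'; simpl; constructor; auto. apply good_aeq; auto.
  - apply good_aeq; auto.
Qed.

Lemma EP_good K R fvs Q f1 f2 : EP K R fvs f1 f2 ->
  (forall u w, In u (fv_form f1) -> K u w -> Q u w) ->
  (forall u w, In u (fv_form f1) -> In u fvs -> R u w -> Q u w) -> Good Q f1 f2.
Proof.
  intros [R' [Ha Hc]] H1 H2. exists R'; split; auto. intros u w Hu Hr.
  destruct (Hc u w Hu Hr) as [?|[? ?]]; eauto.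
Qed.


Lemma perm_in {A} (l m : list A) x : Permutation l m -> In x m -> In x l.
Proof. intros Hp Hx. eapply Permutation_in; [apply Permutation_sym; eauto|auto]. Qed.

Theorem proposition5 (G D : ljb_ctx) (A : formula) (V : list var) :
  (forall x, In x V -> ~ In x (fv_form A)) ->
  forall S1 S2 : lj_seq,
    flattening (G ++ [IBrack V D], A) S1 ->
    flattening ([IBrack V G; IBrack V D], A) S2 ->
    abar_equiv S1 S2.
Proof.
  intros HV [Γ1 E1] [Γ2 E2] [[C1 F1] [[[X1 [HP1 [HF1 HE1]]] [HND1 HFR1]] [HPer1 HS1]]]
    [[C2 F2] [[[X2 [HP2 [HF2 HE2]]] [HND2 HFR2]] [HPer2 HS2]]].
  simpl in *. subst E1 E2.
  apply Forall2_app_inv_l in HF1 as [l1 [l2 [HFG1 [HFD1 ->]]]].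
  inversion HFD1 as [|? jD1 ? ? HD1 Hnil]; subst. inversion Hnil; subst. clear HFD1 Hnil.
  inversion HF2 as [|? jG2 ? X2' HG2 HF2']; subst. inversion HF2' as [|? jD2 ? X2'' HD2 Hnil]; subst.
  inversion Hnil; subst. clear HF2 HF2' Hnil.
  inversion HG2 as [|? ? V2 ? G2 G2x ps Hbij HpG2 HFG2]; subst. clear HG2.
  assert (HFG1' : Forall2 (alphaI eq) G l1).
  { eapply Forall2_impl; [|exact HFG1]. intros a b Hab. apply (aeq_item_alpha _ _ _ Hab). }
  assert (HD1' : alphaI eq (IBrack V D) jD1) by (apply (aeq_item_alpha _ _ _ HD1)).
  assert (HD2' : alphaI eq (IBrack V D) jD2) by (apply (aeq_item_alpha _ _ _ HD2)).
  assert (HGG2 : Forall2 (alphaI (extB V V2 (psR ps) eq)) G G2x).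
  { eapply Forall2_impl; [|exact HFG2]. intros a b Hab. eapply alphaI_mono; [|apply (aeq_item_alpha _ _ _ Hab)].
    apply (interp_extB ps V V2 [] Hbij). }
  clear HFG1 HD1 HD2 HFG2.
  assert (HBR := bij_on_bijR _ _ _ Hbij). destruct HBR as [HBd [HBf HBi]].
  assert (HE := alphaF_comp _ _ _ _ _ (alphaF_flip _ _ _ (proj1 (aeq_form_iff _ _ _) HE1)) (proj1 (aeq_form_iff _ _ _) HE2)).
  assert (HE' := alphaF_comp _ _ _ _ _ (alphaF_flip _ _ _ (proj1 (aeq_form_iff _ _ _) HE2)) (proj1 (aeq_form_iff _ _ _) HE1)).
  simpl in HE, HE'.
  assert (Hbv1 : forall x, In x (flat_map bv_item l1 ++ bv_item jD1) -> In x (bv_ljb_seq (C1, F1))).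
  { intros x Hx. unfold bv_ljb_seq; simpl. apply in_or_app; left. eapply perm_in.
    apply Permutation_flat_map; exact HP1. rewrite flat_map_app; simpl; rewrite app_nil_r; auto. }
  assert (Hfv1 : forall x, In x (flat_map fv_item l1 ++ fv_item jD1 ++ fv_form F1) -> In x (fv_ljb_seq (C1, F1))).
  { intros x Hx. unfold fv_ljb_seq; simpl. rewrite app_assoc in Hx. apply in_app_or in Hx as [Hx|Hx];
    apply in_or_app; [left|right; auto]. eapply perm_in.
    apply Permutation_flat_map; exact HP1. rewrite flat_map_app; simpl; rewrite app_nil_r; auto. }
  assert (HN1 : NoDup (flat_map bv_item l1 ++ bv_item jD1)).
  { unfold bv_ljb_seq in HND1; simpl in HND1. apply NoDup_app_remove_r in HND1.
    eapply Permutation_NoDup in HND1; [|apply Permutation_flat_map; exact HP1].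
    rewrite flat_map_app in HND1; simpl in HND1; rewrite app_nil_r in HND1; auto. }
  assert (Hbv2 : forall x, In x (V2 ++ flat_map bv_item G2 ++ bv_item jD2) -> In x (bv_ljb_seq (C2, F2))).
  { intros x Hx. unfold bv_ljb_seq; simpl. apply in_or_app; left. eapply perm_in.
    apply Permutation_flat_map; exact HP2. simpl. rewrite app_nil_r, <- app_assoc; auto. }
  assert (Hfv2 : forall x, In x (fv_item (IBrack V2 G2) ++ fv_item jD2 ++ fv_form F2) -> In x (fv_ljb_seq (C2, F2))).
  { intros x Hx. unfold fv_ljb_seq; simpl. rewrite app_assoc in Hx. apply in_app_or in Hx as [Hx|Hx];
    apply in_or_app; [left|right; auto]. eapply perm_in.
    apply Permutation_flat_map; exact HP2. simpl. rewrite app_nil_r; auto. }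
  assert (HN2 : NoDup (V2 ++ flat_map bv_item G2 ++ bv_item jD2)).
  { unfold bv_ljb_seq in HND2; simpl in HND2. apply NoDup_app_remove_r in HND2.
    eapply Permutation_NoDup in HND2; [|apply Permutation_flat_map; exact HP2].
    simpl in HND2. rewrite app_nil_r, <- app_assoc in HND2; auto. }
  assert (HA1 : alphaF eq A F1) by (apply (proj1 (aeq_form_iff _ _ _) HE1)).
  assert (HA2 : alphaF eq A F2) by (apply (proj1 (aeq_form_iff _ _ _) HE2)).
  assert (HIP : forall l, Forall ItemProp l) by (intros; apply Forall_forall; intros; apply erase_item_lem).
  assert (HPΓ1 : Permutation Γ1 (erase_ctx l1 ++ erase_item jD1)).
  { eapply Permutation_trans; [exact HPer1|]. unfold erase_ctx. eapply Permutation_trans;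
    [apply Permutation_flat_map; exact HP1|]. rewrite flat_map_app; simpl; rewrite app_nil_r; auto. }
  assert (HPΓ2 : Permutation Γ2 (erase_ctx G2x ++ erase_item jD2)).
  { eapply Permutation_trans; [exact HPer2|]. unfold erase_ctx. eapply Permutation_trans;
    [apply Permutation_flat_map; exact HP2|]. simpl; rewrite app_nil_r. apply Permutation_app; auto.
    apply Permutation_flat_map; auto. }
  pose (RG1 := compR (flipR eq) (extB V V2 (psR ps) eq)).
  assert (HG12 : Forall2 (alphaI RG1) l1 G2x).
  { eapply Forall2_impl; [|exact (pair_via _ _ _ _ _ HFG1' HGG2)]. intros a b [c [Hc1 Hc2]].
    eapply alphaI_comp; [apply alphaI_flip; exact Hc1|exact Hc2]. }
  assert (HD12 : alphaI (compR (flipR eq) eq) jD1 jD2)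
    by (eapply alphaI_comp; [apply alphaI_flip; exact HD1'|exact HD2']).
  destruct (erase_list_lem l1 (HIP l1) RG1 G2x HG12 (NoDup_app_remove_r _ _ HN1))
    as [KG [LG [HKGf [HKGd [HLGp HLGq]]]]].
  destruct (erase_item_lem jD1 _ jD2 HD12 (NoDup_app_remove_l _ _ HN1))
    as [KD [LD [HKDf [HKDd [HLDp HLDq]]]]].
  pose (B1 := flat_map bv_item l1 ++ bv_item jD1).
  pose (Q1 := fun u w => (In u B1 /\ (KG u w \/ KD u w)) \/
                (~ In u B1 /\ ((In u V /\ psR ps u w) \/ (~ In u V /\ u = w)))).
  assert (HQ1 : funcR Q1).
  { intros u w1 w2 H1 H2; destruct H1 as [[Hb Ha]|[Hb Ha]]; destruct H2 as [[Hb' Hc]|[Hb' Hc]]; try tauto.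
    - destruct Ha as [Ha|Ha]; destruct Hc as [Hc|Hc]; eauto; exfalso.
      + eapply nodup_disj; [exact HN1|apply (HKGd _ _ Ha)|apply (HKDd _ _ Hc)].
      + eapply nodup_disj; [exact HN1|apply (HKGd _ _ Hc)|apply (HKDd _ _ Ha)].
    - destruct Ha as [[? Ha]|[? Ha]]; destruct Hc as [[? Hc]|[? Hc]]; try tauto; [eapply HBf; eauto|congruence]. }
  assert (HnB1 : forall u, In u (flat_map fv_item l1 ++ fv_item jD1 ++ fv_form F1) -> ~ In u B1).
  { intros u Hu Hb. apply (HFR1 u); auto. }
  pose (RG2 := compR (flipR (extB V V2 (psR ps) eq)) eq).
  assert (HG21 : Forall2 (alphaI RG2) G2x l1).
  { eapply Forall2_impl; [|exact (pair_via _ _ _ _ _ HGG2 HFG1')]. intros a b [c [Hc1 Hc2]].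
    eapply alphaI_comp; [apply alphaI_flip; exact Hc1|exact Hc2]. }
  assert (HD21 : alphaI (compR (flipR eq) eq) jD2 jD1)
    by (eapply alphaI_comp; [apply alphaI_flip; exact HD2'|exact HD1']).
  assert (HN2' : NoDup (flat_map bv_item G2x ++ bv_item jD2)).
  { apply NoDup_app_remove_l in HN2. eapply Permutation_NoDup; [|exact HN2].
    apply Permutation_app; auto. apply Permutation_flat_map; auto. }
  destruct (erase_list_lem G2x (HIP G2x) RG2 l1 HG21 (NoDup_app_remove_r _ _ HN2'))
    as [KG' [LG' [HKGf' [HKGd' [HLGp' HLGq']]]]].
  destruct (erase_item_lem jD2 _ jD1 HD21 (NoDup_app_remove_l _ _ HN2'))
    as [KD' [LD' [HKDf' [HKDd' [HLDp' HLDq']]]]].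
  pose (B2 := flat_map bv_item G2x ++ bv_item jD2).
  pose (Q2 := fun u w => (In u B2 /\ (KG' u w \/ KD' u w)) \/
                (~ In u B2 /\ ((In u V2 /\ psR ps w u) \/ (~ In u V2 /\ u = w)))).
  assert (HQ2 : funcR Q2).
  { intros u w1 w2 H1 H2; destruct H1 as [[Hb Ha]|[Hb Ha]]; destruct H2 as [[Hb' Hc]|[Hb' Hc]]; try tauto.
    - destruct Ha as [Ha|Ha]; destruct Hc as [Hc|Hc]; eauto; exfalso.
      + eapply nodup_disj; [exact HN2'|apply (HKGd' _ _ Ha)|apply (HKDd' _ _ Hc)].
      + eapply nodup_disj; [exact HN2'|apply (HKGd' _ _ Hc)|apply (HKDd' _ _ Ha)].
    - destruct Ha as [[? Ha]|[? Ha]]; destruct Hc as [[? Hc]|[? Hc]]; try tauto; [eapply HBi; eauto|congruence]. }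
  assert (HB2bv : forall u, In u B2 -> In u (flat_map bv_item G2 ++ bv_item jD2)).
  { intros u Hu. eapply perm_in; [|exact Hu]. apply Permutation_app; auto. apply Permutation_flat_map; auto. }
  exists (sfun Q1), (sfun Q2). split.
  - apply assemble with (X := erase_ctx l1 ++ erase_item jD1) (Y := LG ++ LD); auto.
    + eapply Permutation_trans; [exact HPΓ2|]. apply Permutation_app; auto.
    + apply Forall2_app.
      * eapply Forall2_impl; [|exact HLGq]. intros f1 f2 Hep. eapply EP_good; [exact Hep| |].
        -- intros u w _ Hk. left. split; [apply in_or_app; left; eapply HKGd; eauto|left; auto].
        -- intros u w Hu Hin Hr. right. split; [apply HnB1; apply in_or_app; left; auto|].
           destruct Hr as [v [Hv Hvw]]. unfold flipR in Hv. subst v.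
           destruct Hvw as [Hp|[Hn1 [Hn2 Heq]]]; [left; split; [apply (HBd _ _ Hp)|auto]|right; auto].
      * eapply Forall2_impl; [|exact HLDq]. intros f1 f2 Hep. eapply EP_good; [exact Hep| |].
        -- intros u w _ Hk. left. split; [apply in_or_app; right; eapply HKDd; eauto|right; auto].
        -- intros u w Hu Hin Hr. right. split; [apply HnB1; apply in_or_app; right; apply in_or_app; left; auto|].
           destruct Hr as [v [Hv Hvw]]. unfold flipR in Hv. subst v w. right. split; auto.
           intro HuV. destruct (alphaI_fv _ _ _ _ (alphaI_flip _ _ _ HD1') Hin) as [w' [Hw' Hw'in]].
           unfold flipR in Hw'. subst w'. apply in_filter_notV in Hw'in. tauto.
    + exists (compR (flipR eq) eq); split; [exact HE|]. intros u w Hu [v [Hv Hvw]]. unfold flipR in Hv. subst v w.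
      right; split; [apply HnB1; apply in_or_app; right; apply in_or_app; right; auto|].
      right; split; auto. intro HuV. destruct (alphaF_fv _ _ _ _ (alphaF_flip _ _ _ HA1) Hu) as [w' [Hw' Hw'in]].
      unfold flipR in Hw'; subst w'. eapply HV; eauto.
  - apply assemble with (X := erase_ctx G2x ++ erase_item jD2) (Y := LG' ++ LD'); auto.
    + eapply Permutation_trans; [exact HPΓ1|]. apply Permutation_app; auto.
    + apply Forall2_app.
      * eapply Forall2_impl; [|exact HLGq']. intros f1 f2 Hep. eapply EP_good; [exact Hep| |].
        -- intros u w _ Hk. left. split; [apply in_or_app; left; eapply HKGd'; eauto|left; auto].
        -- intros u w Hu Hin Hr. right.
           destruct Hr as [v [Hv Hvw]]. unfold flipR in Hv. subst v.
           destruct Hv as [Hp|[Hn1 [Hn2 Heq]]].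
           ++ assert (HuV2 : In u V2) by (apply (HBd _ _ Hp)). split.
              ** intro Hb. apply HB2bv in Hb. eapply nodup_disj; [exact HN2|exact HuV2|exact Hb].
              ** left; auto.
           ++ subst w. split; [|right; auto].
              intro Hb. apply HB2bv in Hb. apply (HFR2 u).
              ** apply Hbv2. apply in_or_app; right; auto.
              ** apply Hfv2. apply in_or_app; left. apply in_filter_notV. split; auto.
                 eapply perm_in; [|exact Hin]. apply Permutation_flat_map; auto.
      * eapply Forall2_impl; [|exact HLDq']. intros f1 f2 Hep. eapply EP_good; [exact Hep| |].
        -- intros u w _ Hk. left. split; [apply in_or_app; right; eapply HKDd'; eauto|right; auto].
        -- intros u w Hu Hin Hr. destruct Hr as [v [Hv Hvw]]. unfold flipR in Hv. subst v w.
           assert (Hf : In u (fv_ljb_seq (C2, F2))) by (apply Hfv2; apply in_or_app; right; apply in_or_app; left; auto).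
           right. split.
           ++ intro Hb. apply HB2bv in Hb. apply (HFR2 u); auto. apply Hbv2. apply in_or_app; right; auto.
           ++ right. split; auto. intro Hv2. apply (HFR2 u); auto. apply Hbv2. apply in_or_app; left; auto.
    + exists (compR (flipR eq) eq); split; [exact HE'|]. intros u w Hu [v [Hv Hvw]]. unfold flipR in Hv. subst v w.
      assert (Hf : In u (fv_ljb_seq (C2, F2))) by (apply Hfv2; apply in_or_app; right; apply in_or_app; right; auto).
      right. split.
      * intro Hb. apply HB2bv in Hb. apply (HFR2 u); auto. apply Hbv2. apply in_or_app; right; auto.
      * right. split; auto. intro Hv2. apply (HFR2 u); auto. apply Hbv2. apply in_or_app; left; auto.
Qed.
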